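(* For finite groups $G$ and $H$, $P_e(G)\cong P_e(H)$ if and only if $C(G)\cong C(H)$ and $|\mathrm{Cyc}(G)|=|\mathrm{Cyc}(H)|$.
   Context: All groups are finite. For a group $X$, the enhanced power graph $P_e(X)$ is the simple graph with vertex set $X$ in which two distinct vertices $x,y$ are adjacent if and only if $\langle x,y\rangle$ is cyclic. Let $\mathrm{Cyc}(X)=\{x\in X : \langle x,y\rangle \text{ is cyclic for all } y\in X\}$. The cyclic graph $C(X)$ is the induced subgraph of $P_e(X)$ on the vertex set $X\setminus \mathrm{Cyc}(X)$. *)

(* Defs.v *)
From mathcomp Require Import all_boot all_fingroup all_solvable.
Set Implicit Arguments. Unset Strict Implicit. Unset Printing Implicit Defensive.
Local Open Scope group_scope.

(* Adjacency in the enhanced power graph of a finite group gT (the whole type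
   is the group): distinct x, y with <x, y> cyclic. *)
Definition epg_adj (gT : finGroupType) (x y : gT) : bool :=
  (x != y) && cyclic <<[set x; y]>>.

Definition Cyc (gT : finGroupType) : {set gT} :=
  [set x : gT | [forall y : gT, cyclic <<[set x; y]>>]].

(* Vertex set of the cyclic graph C(X): X \ Cyc(X). *)
Definition noncyc (gT : finGroupType) : {set gT} := ~: Cyc gT.

Definition induced_iso (gT hT : finGroupType) (A : {set gT}) (B : {set hT}) : Prop :=
  exists f : {x : gT | x \in A} -> {y : hT | y \in B},
    bijective f /\
    forall u v, epg_adj (val (f u)) (val (f v)) = epg_adj (val u) (val v).

Definition epg_iso (gT hT : finGroupType) : Prop :=
  exists f : gT -> hT, bijective f /\
    forall x y, epg_adj (f x) (f y) = epg_adj x y.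

Definition cyc_graph_iso (gT hT : finGroupType) : Prop :=
  induced_iso (noncyc gT) (noncyc hT).

(* Main.v *)
Require Import Defs.
From mathcomp Require Import all_boot all_fingroup all_solvable.
Set Implicit Arguments. Unset Strict Implicit. Unset Printing Implicit Defensive.
Local Open Scope group_scope.

Lemma CycP (gT : finGroupType) (x : gT) :
  reflect (forall y, y != x -> epg_adj x y) (x \in Cyc gT).
Proof.
rewrite inE; apply: (iffP forallP) => H y.
  by move=> ne; rewrite /epg_adj eq_sym ne H.
case: (eqVneq y x) => [->|ne].
  by rewrite setUid; exact: cycle_cyclic.
by case/andP: (H y ne).
Qed.

Lemma adj_neq (gT : finGroupType) (x y : gT) : epg_adj x y -> x != y.
Proof. by case/andP. Qed.

Lemma adj_sym (gT : finGroupType) (x y : gT) : epg_adj x y = epg_adj y x.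
Proof. by rewrite /epg_adj eq_sym setUC. Qed.

Lemma adj_cycl (gT : finGroupType) (x y : gT) : x \in Cyc gT -> epg_adj x y = (x != y).
Proof.
move=> /CycP H; apply/idP/idP; first exact: adj_neq.
by rewrite eq_sym => /H.
Qed.

Lemma adj_cycr (gT : finGroupType) (x y : gT) : y \in Cyc gT -> epg_adj x y = (x != y).
Proof. by move=> Hy; rewrite adj_sym adj_cycl // eq_sym. Qed.

Lemma adj_mix (gT : finGroupType) (x y : gT) : x \in Cyc gT -> y \notin Cyc gT -> epg_adj x y.
Proof.
move=> Hx Hy; rewrite adj_cycl //; apply/eqP => E; by rewrite -E Hx in Hy.
Qed.

Lemma iso_Cyc (gT hT : finGroupType) (f : gT -> hT) :
  bijective f -> (forall x y, epg_adj (f x) (f y) = epg_adj x y) ->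
  forall x, (f x \in Cyc hT) = (x \in Cyc gT).
Proof.
move=> [g fK gK] Hadj x; apply/CycP/CycP => H y ne.
  rewrite -Hadj; apply: H; apply: contra ne => /eqP E.
  by rewrite -(fK y) E fK.
rewrite -(gK y) Hadj; apply: H; apply: contra ne => /eqP E.
by rewrite -(gK y) E.
Qed.

Definition splitC (gT : finGroupType) (x : gT) :
  {u : {x : gT | x \in Cyc gT} | x = val u} +
  {v : {x : gT | x \in noncyc gT} | x = val v}.
Proof.
case: (boolP (x \in Cyc gT)) => H.
  by left; exists (exist _ x H).
have H' : x \in noncyc gT by rewrite /noncyc in_setC.
by right; exists (exist _ x H').
Defined.

Theorem corollary2 (gT hT : finGroupType) :
  epg_iso gT hT <-> (cyc_graph_iso gT hT /\ #|Cyc gT| = #|Cyc hT|).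
Proof.
split.
  move=> [f [fbij fadj]].
  have [g fK gK] := fbij.
  have gbij : bijective g by exists f.
  have gadj : forall x y, epg_adj (g x) (g y) = epg_adj x y.
    by move=> x y; rewrite -fadj !gK.
  have fC := iso_Cyc fbij fadj; have gC := iso_Cyc gbij gadj.
  have fN : forall x, x \in noncyc gT -> f x \in noncyc hT.
    by move=> x; rewrite /noncyc !in_setC fC.
  have gN : forall x, x \in noncyc hT -> g x \in noncyc gT.
    by move=> x; rewrite /noncyc !in_setC gC.
  split.
    exists (fun u => exist _ (f (val u)) (fN _ (valP u))); split.
      exists (fun u => exist _ (g (val u)) (gN _ (valP u))).
        by move=> u; apply: val_inj; rewrite /= fK.
      by move=> u; apply: val_inj; rewrite /= gK.
    by move=> u v /=; rewrite fadj.
  have -> : Cyc hT = f @: Cyc gT.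
    apply/setP => y; rewrite -(gK y) mem_imset ?fC //.
    exact: bij_inj.
  by rewrite card_imset //; exact: bij_inj.
move=> [[F [Fbij Fadj]] E].
have [F' FK F'K] := Fbij.
have E' : #|{: {x : gT | x \in Cyc gT}}| = #|{: {x : hT | x \in Cyc hT}}|.
  by rewrite !card_sig.
pose h (u : {x : gT | x \in Cyc gT}) : {x : hT | x \in Cyc hT} :=
  enum_val (cast_ord E' (enum_rank u)).
pose h' (u : {x : hT | x \in Cyc hT}) : {x : gT | x \in Cyc gT} :=
  enum_val (cast_ord (esym E') (enum_rank u)).
have hK : cancel h h'.
  by move=> u; rewrite /h /h' enum_valK cast_ordK enum_rankK.
have h'K : cancel h' h.
  by move=> u; rewrite /h /h' enum_valK cast_ordKV enum_rankK.
have hinj : injective h by apply: can_inj hK.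
have Finj : injective F by apply: can_inj FK.
pose phi (x : gT) : hT :=
  match splitC x with inl u => val (h (sval u)) | inr v => val (F (sval v)) end.
pose psi (y : hT) : gT :=
  match splitC y with inl u => val (h' (sval u)) | inr v => val (F' (sval v)) end.
have splitCc : forall (T : finGroupType) (u : {x : T | x \in Cyc T}),
    exists p, splitC (val u) = inl p /\ sval p = u.
  move=> T u; case: (splitC (val u)) => [[u' e]|[v e]].
    by exists (exist _ u' e); split => //; apply: val_inj.
  by have Hv := valP v; rewrite /noncyc in_setC -e (valP u) in Hv.
have splitCn : forall (T : finGroupType) (v : {x : T | x \in noncyc T}),
    exists p, splitC (val v) = inr p /\ sval p = v.
  move=> T v; case: (splitC (val v)) => [[u e]|[v' e]].
    by have Hv := valP v; rewrite /noncyc in_setC e (valP u) in Hv.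
  by exists (exist _ v' e); split => //; apply: val_inj.
have phic : forall u, phi (val u) = val (h u).
  by move=> u; rewrite /phi; have [p [-> ->]] := splitCc _ u.
have phin : forall v, phi (val v) = val (F v).
  by move=> v; rewrite /phi; have [p [-> ->]] := splitCn _ v.
have psic : forall u, psi (val u) = val (h' u).
  by move=> u; rewrite /psi; have [p [-> ->]] := splitCc _ u.
have psin : forall v, psi (val v) = val (F' v).
  by move=> v; rewrite /psi; have [p [-> ->]] := splitCn _ v.
exists phi; split.
    exists psi.
      move=> x; case: (splitC x) => [[u ->]|[v ->]].
        by rewrite phic psic hK.
      by rewrite phin psin FK.
    move=> y; case: (splitC y) => [[u ->]|[v ->]].
      by rewrite psic phic h'K.
    by rewrite psin phin F'K.
move=> x y.
have nC : forall (T : finGroupType) (v : {x : T | x \in noncyc T}), val v \notin Cyc T.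
  by move=> T v; have := valP v; rewrite /noncyc in_setC.
case: (splitC x) => [[u ->]|[v ->]]; case: (splitC y) => [[u' ->]|[v' ->]].
- rewrite !phic adj_cycl ?(valP (h u)) // adj_cycl ?(valP u) //.
  by rewrite !(inj_eq val_inj) (inj_eq hinj).
- by rewrite phic phin !adj_mix ?(valP u) ?(valP (h u)) ?nC.
- by rewrite phic phin adj_sym [in RHS]adj_sym !adj_mix ?(valP u') ?(valP (h u')) ?nC.
- by rewrite !phin Fadj.
Qed.
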